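(* Let $G$ be a group acting faithfully by homeomorphisms on an infinite Hausdorff space $\mathcal{X}$, and let $U$ be an open subset of $\mathcal{X}$ such that its $G$-orbit $\{gU: g\in G\}$ is a basis of the topology of $\mathcal{X}$. Then every non-trivial normal subgroup of $G$ contains $R_U$.
   Context: For an open $U\subset\mathcal{X}$, $G_{(U)}$ denotes the subgroup of elements of $G$ acting trivially on $\mathcal{X}\setminus U$, and $R_U$ denotes the normal closure in $G$ of the derived subgroup $G_{(U)}'=[G_{(U)},G_{(U)}]$. *)

(* Defs.v *)
From Stdlib Require Import List.

Set Implicit Arguments.

Record is_group {G : Type} (mul : G -> G -> G) (inv : G -> G) (e : G) : Prop := {
  grp_assoc : forall a b c, mul a (mul b c) = mul (mul a b) c;
  grp_idl : forall a, mul e a = a;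
  grp_idr : forall a, mul a e = a;
  grp_invl : forall a, mul (inv a) a = e;
  grp_invr : forall a, mul a (inv a) = e }.

Section GroupDefs.
Variables (G : Type) (mul : G -> G -> G) (inv : G -> G) (e : G).

Definition commg (a b : G) : G := mul (mul (inv a) (inv b)) (mul a b).

Inductive gen (S : G -> Prop) : G -> Prop :=
  | gen_in : forall x, S x -> gen S x
  | gen_one : gen S e
  | gen_mul : forall x y, gen S x -> gen S y -> gen S (mul x y)
  | gen_inv : forall x, gen S x -> gen S (inv x).

Definition derived (H : G -> Prop) : G -> Prop :=
  gen (fun x => exists a b, H a /\ H b /\ x = commg a b).

Definition normal_closure (H : G -> Prop) : G -> Prop :=
  gen (fun x => exists g h, H h /\ x = mul (inv g) (mul h g)).

Definition is_normal_subgroup (N : G -> Prop) : Prop :=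
  N e /\ (forall x y, N x -> N y -> N (mul x y)) /\ (forall x, N x -> N (inv x))
  /\ (forall g x, N x -> N (mul (inv g) (mul x g))).
End GroupDefs.

Record is_topology {X : Type} (opn : (X -> Prop) -> Prop) : Prop := {
  top_full : opn (fun _ => True);
  top_inter : forall A B, opn A -> opn B -> opn (fun x => A x /\ B x);
  top_union : forall F : (X -> Prop) -> Prop,
      (forall A, F A -> opn A) -> opn (fun x => exists A, F A /\ A x) }.

Definition hausdorff {X : Type} (opn : (X -> Prop) -> Prop) : Prop :=
  forall x y : X, x <> y -> exists A B, opn A /\ opn B /\ A x /\ B y /\
     (forall z, ~ (A z /\ B z)).

Definition infinite_type (X : Type) : Prop :=
  ~ exists l : list X, forall x, In x l.

Definition continuous {X : Type} (opn : (X -> Prop) -> Prop) (f : X -> X) : Prop :=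
  forall A, opn A -> opn (fun x => A (f x)).

Definition is_basis {X : Type} (opn : (X -> Prop) -> Prop)
    (B : (X -> Prop) -> Prop) : Prop :=
  (forall W, B W -> opn W) /\
  (forall V, opn V -> forall x, V x ->
     exists W, B W /\ W x /\ (forall y, W y -> V y)).

Section ActionDefs.
Variables (G X : Type) (mul : G -> G -> G) (e : G) (act : G -> X -> X).

Definition is_action : Prop :=
  (forall x, act e x = x) /\ (forall g h x, act (mul g h) x = act g (act h x)).

Definition faithful : Prop := forall g, (forall x, act g x = x) -> g = e.

Definition img (g : G) (U : X -> Prop) : X -> Prop :=
  fun y => exists u, U u /\ y = act g u.

Definition orbit_sets (U : X -> Prop) : (X -> Prop) -> Prop :=
  fun W => exists g, forall y, W y <-> img g U y.

(* G_(U): elements acting trivially on X \ U *)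
Definition rist (U : X -> Prop) : G -> Prop :=
  fun g => forall x, ~ U x -> act g x = x.
End ActionDefs.

Definition R_U {G X : Type} (mul : G -> G -> G) (inv : G -> G) (e : G)
    (act : G -> X -> X) (U : X -> Prop) : G -> Prop :=
  normal_closure mul inv e (derived mul inv e (rist act U)).

(* Main.v *)
Require Import Defs.
From Stdlib Require Import Classical.
Set Implicit Arguments.

Section Aux.
Variables (G : Type) (mul : G -> G -> G) (inv : G -> G) (e : G).
Hypothesis HG : is_group mul inv e.
Variables (X : Type) (act : G -> X -> X).
Hypothesis Hact : is_action mul e act.
Hypothesis Hfaith : faithful e act.

Lemma act_mul g h x : act (mul g h) x = act g (act h x).
Proof. apply (proj2 Hact). Qed.
Lemma act_e x : act e x = x.
Proof. apply (proj1 Hact). Qed.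
Lemma act_invK g x : act (inv g) (act g x) = x.
Proof. rewrite <- act_mul, (grp_invl HG), act_e; reflexivity. Qed.
Lemma act_Kinv g x : act g (act (inv g) x) = x.
Proof. rewrite <- act_mul, (grp_invr HG), act_e; reflexivity. Qed.

Lemma eq_by_act g h : (forall y, act g y = act h y) -> g = h.
Proof.
  intro H.
  assert (E : mul g (inv h) = e).
  { apply Hfaith. intro y. rewrite act_mul, H, act_Kinv. reflexivity. }
  rewrite <- (grp_idl HG h), <- E, <- (grp_assoc HG), (grp_invl HG), (grp_idr HG).
  reflexivity.
Qed.

Lemma act_inv_eq g z w : z = act g w -> act (inv g) z = w.
Proof. intros ->. apply act_invK. Qed.

Lemma inv_mul x y : inv (mul x y) = mul (inv y) (inv x).
Proof.
  apply eq_by_act. intro z. apply act_inv_eq.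
  rewrite !act_mul, !act_Kinv. reflexivity.
Qed.

Lemma inv_inv g : inv (inv g) = g.
Proof. apply eq_by_act. intro z. apply act_inv_eq. rewrite act_invK. reflexivity. Qed.

Definition fixes (a : G) (S : X -> Prop) := forall x, ~ S x -> act a x = x.

Lemma fixes_inv a S : fixes a S -> fixes (inv a) S.
Proof. intros H x Hx. rewrite <- (H x Hx) at 1. apply act_invK. Qed.

Lemma maps_in a S y : fixes a S -> S y -> S (act a y).
Proof.
  intros H Hy. apply NNPP. intro C.
  pose proof (H _ C) as E.
  assert (act (inv a) (act a (act a y)) = act (inv a) (act a y)) by (rewrite E; reflexivity).
  rewrite !act_invK in H0. apply C. rewrite H0. exact Hy.
Qed.

Lemma maps_out a S T y : fixes a T -> (forall z, ~ (S z /\ T z)) -> ~ S y -> ~ S (act a y).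
Proof.
  intros H D Hy. destruct (classic (T y)) as [Ty|Ty].
  - intro C. apply (D (act a y)). split; [exact C| apply maps_in; assumption].
  - rewrite H; assumption.
Qed.

Lemma key a b d W T :
  fixes a W -> fixes b W -> fixes d T -> (forall z, ~ (W z /\ T z)) ->
  forall y, act (inv d) (act (inv a) (act (inv b) (act a (act d (act b y))))) =
            act (inv a) (act (inv b) (act a (act b y))).
Proof.
  intros Fa Fb Fd D y.
  pose proof (fixes_inv Fa) as Fa'. pose proof (fixes_inv Fb) as Fb'.
  pose proof (fixes_inv Fd) as Fd'.
  destruct (classic (W y)) as [Wy|Wy].
  - assert (Wby : W (act b y)) by (apply maps_in; auto).
    rewrite (Fd (act b y)) by (intro C; apply (D _ (conj Wby C))).
    apply Fd'. intro C. eapply D. split; [|exact C].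
    apply maps_in; auto. apply maps_in; auto. apply maps_in; auto.
  - rewrite (Fb y Wy).
    assert (Wdy : ~ W (act d y)) by (apply (@maps_out d W T y) ; auto).
    rewrite (Fa _ Wdy), (Fb' _ Wdy), (Fa' _ Wdy), act_invK.
    rewrite (Fa _ Wy), (Fb' _ Wy), (Fa' _ Wy). reflexivity.
Qed.
End Aux.

Theorem lemma4p2 (G : Type) (mul : G -> G -> G) (inv : G -> G) (e : G)
  (HG : is_group mul inv e)
  (X : Type) (opn : (X -> Prop) -> Prop) (HX : is_topology opn)
  (Hhaus : hausdorff opn) (Hinf : infinite_type X)
  (act : G -> X -> X) (Hact : is_action mul e act)
  (Hhomeo : forall g, continuous opn (act g))
  (Hfaith : faithful e act)
  (U : X -> Prop) (HU : opn U) (Hbasis : is_basis opn (orbit_sets act U)) :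
  forall N : G -> Prop, is_normal_subgroup mul inv e N ->
    (exists n, N n /\ n <> e) ->
    forall x, R_U mul inv e act U x -> N x.
Proof.
  intros N [N1 [NM [NI NC]]] [n [Nn Hne]].
  pose proof (act_mul Hact) as AM.
  pose proof (act_invK HG Hact) as AIK.
  pose proof (act_Kinv HG Hact) as AKI.
  pose proof (eq_by_act HG Hact Hfaith) as EQ.
  assert (Hx : exists x, act n x <> x).
  { apply NNPP. intro C. apply Hne. apply Hfaith. intro y.
    apply NNPP. intro C'. apply C. exists y. exact C'. }
  destruct Hx as [x0 Hx0].
  destruct (Hhaus x0 (act n x0)) as [A [B [OA [OB [Ax [Bx DAB]]]]]].
  { intro C. apply Hx0. symmetry. exact C. }
  destruct Hbasis as [_ Hb].
  destruct (Hb (fun y => A y /\ B (act n y))) with (x := x0) as [W [[g Wg] [Wx WV]]].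
  { apply (top_inter HX). exact OA. apply (Hhomeo n B OB). }
  { split; assumption. }
  assert (WD : forall y, W y -> ~ W (act n y)).
  { intros y Wy C. destruct (WV _ Wy) as [_ Bn]. destruct (WV _ C) as [An _].
    apply (DAB (act n y)). split; assumption. }
  assert (CW : forall a b, fixes act a W -> fixes act b W -> N (commg mul inv a b)).
  { intros a b Fa Fb.
    set (d := mul (inv n) (mul (inv a) n)).
    set (c := mul a d).
    assert (Fd : fixes act d (fun z => W (act n z))).
    { intros z Hz. unfold d. rewrite !AM. rewrite (fixes_inv HG Hact Fa _ Hz). apply AIK. }
    assert (Nc : N c).
    { assert (E : c = mul (mul (inv (inv a)) (mul (inv n) (inv a))) n).
      { apply EQ. intro y. unfold c, d. rewrite (inv_inv HG Hact Hfaith). rewrite !AM. reflexivity. }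
      rewrite E. apply NM; [apply NC; apply NI|]; exact Nn. }
    assert (E : commg mul inv a b = mul (inv c) (mul (inv b) (mul c b))).
    { apply EQ. intro y. unfold commg, c.
      rewrite !(inv_mul HG Hact Hfaith). rewrite !AM.
      symmetry. apply (key HG Hact Fa Fb Fd).
      intros z [Wz Tz]. exact (WD z Wz Tz). }
    rewrite E. apply NM. apply (NI c Nc). apply (NC b c Nc). }
  assert (CU : forall a, rist act U a -> fixes act (mul g (mul a (inv g))) W).
  { intros a Ha y Hy. rewrite !AM. rewrite Ha. apply AKI.
    intro C. apply Hy. apply Wg. exists (act (inv g) y). split; [exact C| symmetry; apply AKI]. }
  assert (DN : forall z, derived mul inv e (rist act U) z -> N z).
  { intros z Hz. induction Hz as [z [a [b [Ha [Hb' ->]]]]| | | ].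
    - assert (E : commg mul inv a b =
        mul (inv g) (mul (commg mul inv (mul g (mul a (inv g))) (mul g (mul b (inv g)))) g)).
      { apply EQ. intro y. unfold commg. rewrite !(inv_mul HG Hact Hfaith).
        rewrite !(inv_inv HG Hact Hfaith). rewrite !AM. rewrite !AIK. reflexivity. }
      rewrite E. apply NC. apply CW; apply CU; assumption.
    - exact N1.
    - apply NM; assumption.
    - apply NI; assumption. }
  intros z Hz. induction Hz as [z [h [k [Hk ->]]]| | | ].
  - apply NC. apply DN. exact Hk.
  - exact N1.
  - apply NM; assumption.
  - apply NI; assumption.
Qed.
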